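(* Let a trader with concave, increasing utility $U_S$ hold $\Delta>0$ units of a yield token with outstanding random yield payments $Y_1,\dots,Y_n$ (paid in order before maturity). A menu of prices $(p_1,\dots,p_n)$ offers the trader the choice of selling all $\Delta$ tokens just before payment $Y_t$ at price $p_t$ ($t\in\{1,\dots,n\}$), giving expected utility $\tilde U^t_S=\mathbb{E}[U_S((\sum_{i=1}^{t-1}Y_i+p_t)\Delta)]$, or never selling, giving $\tilde U^{n+1}_S=\mathbb{E}[U_S((\sum_{i=1}^nY_i)\Delta)]$. Define $$p_n^*(\Delta)=\sup\Big\{p>0:\ \mathbb{E}\big[U_S((\textstyle\sum_{i=1}^{n-1}Y_i+p)\Delta)\big]\le \mathbb{E}\big[U_S((\sum_{i=1}^nY_i)\Delta)\big]\Big\},$$ and for $t\in\{1,\dots,n-1\}$, $$p_t^*(\Delta)=p_{t+1}^*(\Delta)+\sup\Big\{p>0:\ \mathbb{E}\big[U_S((\textstyle\sum_{i=1}^{t-1}Y_i+p+p^*_{t+1})\Delta)\big]\le \mathbb{E}\big[U_S((\sum_{i=1}^{t}Y_i+p^*_{t+1})\Delta)\big]\Big\}.$$ If the liquidity provider presents the menu $\{p_i^*(\Delta)\}_{i=1}^n$, the trader obtains the same expected utility for each of his $n+1$ actions. Moreover, $\{p_i^*(\Delta)\}_{i=1}^n$ is the unique indifference menu.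
   Context: An indifference menu is a menu of prices $(p_1,\dots,p_n)$ under which $\tilde U^1_S=\tilde U^2_S=\dots=\tilde U^{n+1}_S$. Expectations are over the joint distribution of $Y_1,\dots,Y_n$. *)

(* Defs.v *)
From HB Require Import structures.
From mathcomp Require Import all_boot all_order all_algebra.
From mathcomp Require Import all_classical all_reals all_analysis.
Set Implicit Arguments. Unset Strict Implicit. Unset Printing Implicit Defensive.
Import Order.TTheory GRing.Theory Num.Theory.
Local Open Scope ring_scope.

Definition concave_fun (R : realType) (U : R -> R) : Prop :=
  forall (x y l : R), 0 <= l <= 1 ->
    l * U x + (1 - l) * U y <= U (l * x + (1 - l) * y).

Definition strictly_increasing (R : realType) (U : R -> R) : Prop :=
  forall x y : R, x < y -> U x < U y.

Section yield.
Context {d : measure_display} {T : measurableType d} {R : realType}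
  (P : probability T R) (n : nat) (U : R -> R) (Y : nat -> T -> R) (Delta : R).

Definition psum (t : nat) (w : T) : R := \sum_(1 <= i < t) Y i w.

Definition util_sell (t : nat) (pt : R) : \bar R :=
  'E_P[fun w => U ((psum t w + pt) * Delta)].

Definition util_never : \bar R :=
  'E_P[fun w => U (psum n.+1 w * Delta)].

Definition tildeU (p : nat -> R) (t : nat) : \bar R :=
  if (t <= n)%N then util_sell t (p t) else util_never.

Definition indifference_menu (p : nat -> R) : Prop :=
  forall s t : nat, (1 <= s <= n.+1)%N -> (1 <= t <= n.+1)%N ->
    tildeU p s = tildeU p t.

(* increment: sup{p > 0 : E[U((S_{t-1}+p+q)Δ)] <= E[U((S_t + q)Δ)]},
   with q = p*_{t+1} (and q = 0 for t = n) *)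
Definition pincr (t : nat) (q : R) : R :=
  sup [set p : R | 0 < p /\
    ('E_P[fun w => U ((psum t w + p + q) * Delta)] <=
     'E_P[fun w => U ((psum t.+1 w + q) * Delta)])%E].

(* pstar_down k = p*_{n+1-k}, with the convention p*_{n+1} = 0 *)
Fixpoint pstar_down (k : nat) : R :=
  match k with
  | 0 => 0
  | k'.+1 => pstar_down k' + pincr (n - k') (pstar_down k')
  end.

Definition pstar (t : nat) : R := pstar_down (n.+1 - t).

End yield.

(* Main.v *)
Require Import Defs.
From HB Require Import structures.
From mathcomp Require Import all_boot all_order all_algebra.
From mathcomp Require Import all_classical all_reals all_analysis.
From mathcomp Require Import measurable_realfun ring lra zify.
Import Order.TTheory GRing.Theory Num.Theory.
Local Open Scope classical_set_scope.
Local Open Scope ring_scope.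

Section core.
Context d (T : measurableType d) (R : realType) (P : probability T R)
  (U : R -> R) (Delta : R).
Hypotheses (hD : 0 < Delta) (hc : concave_fun U) (hU : strictly_increasing U).

Lemma U_nd : {homo U : x y / x <= y}.
Proof. by move=> x y; rewrite le_eqVlt => /predU1P [->//|/hU/ltW]. Qed.

Lemma TC a b c : a < b -> b < c -> (U c - U b) * (b - a) <= (U b - U a) * (c - b).
Proof.
move=> ab bc.
have ca : 0 < c - a by lra.
set l := (c - b) / (c - a).
have hl : l * (c - a) = c - b by rewrite /l divfK // gt_eqF.
have l0 : 0 <= l <= 1 by apply/andP; split; nra.
have := @hc a c l l0.
have -> : l * a + (1 - l) * c = b by nra.
move=> h.
have h2 := ler_wpM2r (ltW ca) h.
have e : (l * U a + (1 - l) * U c) * (c - a) = (l * (c - a)) * U a + ((c - a) - l * (c - a)) * U c by ring.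
rewrite e hl in h2.
lra.
Qed.

Lemma Lmeas (f : T -> R) : f \in Lfun P 1 -> measurable_fun setT f.
Proof. by move/Lfun1_integrable/integrableP => [/measurable_EFinP]. Qed.

Lemma LU (f : T -> R) m : f \in Lfun P 1 -> (forall w, m <= f w) ->
  (fun w => U (f w * Delta)) \in Lfun P 1.
Proof.
move=> hf hm.
set x0 := m * Delta. set L := U x0 - U (x0 - 1).
have L0 : 0 < L by rewrite /L subr_gt0; apply: hU; lra.
have gi : (fun w => (`|U x0| + `|x0| * L) + (L * Delta) * `|f w|) \in Lfun P 1.
  apply: rpredD; first exact: Lfun_cst.
  apply: rpredZ; exact: Lfun_norm.
apply/Lfun1_integrable.
move/Lfun1_integrable: gi => gi.
apply: (le_integrable measurableT _ _ gi).
  apply/measurable_EFinP; apply: measurableT_comp.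
    exact: nondecreasing_measurable U_nd.
  by apply: measurable_funM => //; exact: Lmeas.
move=> x _ /=.
rewrite lee_fin.
set y := f x * Delta.
have y0 : x0 <= y by rewrite /y /x0 ler_wpM2r // ltW.
have up : U y - U x0 <= L * (y - x0).
  move: y0; rewrite le_eqVlt => /predU1P [<-|yx]; first by rewrite !subrr mulr0.
  have := TC (x0 - 1) x0 y ltac:(lra) yx.
  rewrite /L; lra.
have lo : U x0 <= U y by exact: U_nd.
have yb : y - x0 <= `|f x| * Delta + `|x0|.
  rewrite /y; have := ler_norm (f x); have := ler_norm (- x0); rewrite normrN.
  move=> h1 h2; have := ler_wpM2r (ltW hD) h2; lra.
have yb2 := ler_wpM2l (ltW L0) yb.
have n1 := ler_norm (U x0); have n2 := ler_norm (- U x0); rewrite normrN in n2.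
have n3 : 0 <= `|x0| * L by rewrite mulr_ge0 // ltW.
have n4 : 0 <= L * Delta * `|f x| by rewrite !mulr_ge0 // ltW.
rewrite [X in _ <= X]ger0_norm; last by lra.
rewrite ler_norml; apply/andP; split; lra.
Qed.

Lemma E_le (f g : T -> R) : f \in Lfun P 1 -> g \in Lfun P 1 ->
  (forall w, f w <= g w) -> ('E_P[f] <= 'E_P[g])%E.
Proof.
move=> hf hg fg; rewrite unlock; apply: le_integral => //.
- exact: (proj1 (Lfun1_integrable P f) hf).
- exact: (proj1 (Lfun1_integrable P g) hg).
- by move=> x _; rewrite lee_fin.
Qed.

Lemma E_lt (f g : T -> R) : f \in Lfun P 1 -> g \in Lfun P 1 ->
  (forall w, f w < g w) -> ('E_P[f] < 'E_P[g])%E.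
Proof.
move=> hf hg fg.
have hgf : (g \- f) \in Lfun P 1 by apply: rpredB.
have hB := expectationB hg hf.
have ff := expectation_fin_num hf.
have fg' := expectation_fin_num hg.
suff : (0 < 'E_P[g \- f])%E.
  rewrite hB -(fineK ff) -(fineK fg') -EFinB lte_fin subr_gt0 => h.
  by rewrite lte_fin.
rewrite lt0e; apply/andP; split; last first.
  by apply: expectation_ge0 => x /=; rewrite subr_ge0 ltW.
apply/eqP => H0.
have : (\int[P]_x `|(EFin \o (g \- f)%R) x| = 0)%E.
  rewrite -H0 unlock; apply: eq_integral => x _.
  rewrite /=; first [rewrite gee0_abs // lee_fin subr_ge0 ltW // | rewrite ger0_norm // subr_ge0 ltW //].
have mgf : measurable_fun setT (EFin \o (g \- f)%R).
  by apply/measurable_EFinP; exact: Lmeas.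
move/(ae_eq_integral_abs P measurableT mgf).
move=> [N [mN PN sub]].
have : (P setT <= P N)%E.
  apply: le_measure; rewrite ?inE //.
  move=> x _; apply: sub => /= h.
  have := h I; move=> [] /eqP; rewrite subr_eq0 => /eqP e.
  by have := fg x; rewrite e ltxx.
by rewrite probability_setT PN lee_fin ler10.
Qed.

Lemma sup_arg (phi : R -> R) c B :
  (forall a b, a <= b -> phi a <= phi b) ->
  (forall a b l, 0 <= l <= 1 -> l * phi a + (1 - l) * phi b <= phi (l * a + (1 - l) * b)) ->
  phi 0 <= c -> (forall p, phi p <= c -> p < B) ->
  0 <= sup [set p | 0 < p /\ phi p <= c] /\ phi (sup [set p | 0 < p /\ phi p <= c]) = c.
Proof.
move=> mono conc f0 bnd.
set A := [set p | 0 < p /\ phi p <= c].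
have hs : A !=set0 -> has_sup A.
  move=> ne; split => //; exists B; move=> p /= [_ h]; exact: ltW (bnd _ h).
have emp : ~ (A !=set0) -> sup A = 0.
  move=> e; rewrite (_ : A = set0) ?sup0 //; apply/seteqP; split => // x Ax.
  by exfalso; apply: e; exists x.
have s0 : 0 <= sup A.
  case: (pselect (A !=set0)) => [ne|e]; last by rewrite emp.
  case: (ne) => p [p0 pc].
  apply: (le_trans (ltW p0)); exact: (sup_upper_bound (hs ne)).
split => //.
set s := sup A.
have s0' : 0 <= s := s0.
apply/eqP; rewrite eq_le; apply/andP; split; rewrite leNgt; apply/negP => h.
- have spos : 0 < s.
    rewrite lt_neqAle s0 andbT; apply/eqP => s0e.
    rewrite -s0e in h; lra.
  have ne : A !=set0.
    by apply: contrapT => e; move: spos; rewrite /s emp // ltxx.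
  have M0 : 0 <= phi s - phi 0 by rewrite subr_ge0 mono.
  have e0 : 0 < phi s - c by rewrite subr_gt0.
  pose t := (phi s - c) / (2 * ((phi s - phi 0) + (phi s - c))).
  have ht : t * (2 * ((phi s - phi 0) + (phi s - c))) = phi s - c.
    by rewrite /t divfK // gt_eqF //; lra.
  have t0 : 0 < t by rewrite /t divr_gt0 //; lra.
  have t1 : t <= 1 by nra.
  have := conc s 0 (1 - t).
  have -> : (1 - t) * s + (1 - (1 - t)) * 0 = s - t * s by ring.
  move/(_ ltac:(lra)) => hc1.
  have ts : 0 < t * s by rewrite mulr_gt0.
  have : s <= s - t * s.
    apply: ge_sup => // p [_ pc].
    rewrite leNgt; apply/negP => lt.
    have := mono _ _ (ltW lt); nra.
  lra.
- have L0 : 0 <= phi s - phi (s - 1) by rewrite subr_ge0 mono // lerBlDr lerDl.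
  have e0 : 0 < c - phi s by rewrite subr_gt0.
  pose h1 := (c - phi s) / ((phi s - phi (s - 1)) + (c - phi s)).
  have hh : h1 * ((phi s - phi (s - 1)) + (c - phi s)) = c - phi s.
    by rewrite /h1 divfK // gt_eqF //; lra.
  have h0 : 0 < h1 by rewrite /h1 divr_gt0 //; lra.
  pose l := h1 / (1 + h1).
  have hl : l * (1 + h1) = h1 by rewrite /l divfK // gt_eqF //; lra.
  have l01 : 0 <= l <= 1 by apply/andP; split; nra.
  have := conc (s - 1) (s + h1) l l01.
  have -> : l * (s - 1) + (1 - l) * (s + h1) = s by lra.
  move=> K.
  have K2 := ler_wpM2r (ltW (_ : 0 < 1 + h1)) K.
  have e2 : (l * phi (s - 1) + (1 - l) * phi (s + h1)) * (1 + h1) =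
     (l * (1 + h1)) * phi (s - 1) + ((1 + h1) - l * (1 + h1)) * phi (s + h1) by ring.
  rewrite e2 hl in K2.
  have K3 : phi (s + h1) <= c.
    have := K2 ltac:(lra); nra.
  have : s + h1 <= s.
    have As : A (s + h1) by split => //; lra.
    exact: (sup_upper_bound (hs (ex_intro _ _ As))).
  lra.
Qed.

Lemma jensen_bnd (f : T -> R) m : f \in Lfun P 1 -> (forall w, m <= f w) ->
  exists K, ('E_P[fun w => U (f w * Delta)] < (U K)%:E)%E.
Proof.
move=> hf hm.
have WL : (Delta \o* f) \in Lfun P 1 by exact: Lfun_scale.
pose mm := fine ('E_P[Delta \o* f])%E.
have EW : ('E_P[Delta \o* f] = mm%:E)%E by rewrite /mm fineK // expectation_fin_num.
have Dm0 : 0 < U mm - U (mm - 1) by rewrite subr_gt0 hU //; lra.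
have G0 : 0 < U (mm + 1) - U mm by rewrite subr_gt0 hU //; lra.
pose eps := (U (mm + 1) - U mm) / ((U (mm + 1) - U mm) + (U mm - U (mm - 1))).
have he : eps * ((U (mm + 1) - U mm) + (U mm - U (mm - 1))) = U (mm + 1) - U mm.
  by rewrite /eps divfK // gt_eqF //; lra.
have e0 : 0 < eps by rewrite /eps divr_gt0 //; lra.
have e1 : eps < 1 by nra.
pose u := U mm - U (mm - eps).
have u0 : 0 < u by rewrite /u subr_gt0 hU //; lra.
have ub : u <= eps * (U mm - U (mm - 1)).
  have := TC (mm - 1) (mm - eps) mm ltac:(lra) ltac:(lra).
  rewrite /u; nra.
pose s := u / eps.
have hs : s * eps = u by rewrite /s divfK // gt_eqF.
have eu : 0 < eps * u := mulr_gt0 e0 u0.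
have pw : forall y, U y <= (U mm + u - s * mm) + y * s.
  move=> y.
  have E1 : eps * (U mm + u - s * mm + y * s) = eps * U mm + eps * u + u * (y - mm).
    by rewrite -hs; ring.
  rewrite -(ler_pM2l e0) E1.
  have [ym|ym] := ltP mm y.
    have := TC (mm - eps) mm y ltac:(lra) ym.
    rewrite /u in eu *; nra.
  have [ye|ye] := ltP y (mm - eps).
    have := TC y (mm - eps) mm ye ltac:(lra).
    rewrite /u in eu *; nra.
  have := U_nd _ _ ym.
  have : 0 <= u * (y - mm + eps) by rewrite mulr_ge0 //; lra.
  rewrite /u in eu *; nra.
have LU0 := @LU f m hf hm.
have : ('E_P[fun w => U (f w * Delta)] <= 'E_P[(cst (U mm + u - s * mm) \+ s \o* (Delta \o* f))%R])%E.
  apply: E_le => //.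
    apply: rpredD; first exact: Lfun_cst.
    exact: Lfun_scale.
  try (move=> w /=; exact: pw).
rewrite expectationD; last 2 first.
  exact: Lfun_cst.
  exact: Lfun_scale.
rewrite expectation_cst expectationZl // EW -EFinM -EFinD => H.
exists (mm + 1).
apply: (le_lt_trans H); rewrite lte_fin.
rewrite /u in ub *; nra.
Qed.

Definition Aset (X Z : T -> R) (q : R) := [set p : R | 0 < p /\
  ('E_P[fun w => U ((X w + p + q) * Delta)] <= 'E_P[fun w => U ((Z w + q) * Delta)])%E].

Lemma core (X Z : T -> R) (q : R) :
  X \in Lfun P 1 -> Z \in Lfun P 1 -> (forall w, 0 <= X w) ->
  (forall w, X w <= Z w) -> 0 <= q ->
  0 <= sup (Aset X Z q) /\
  ('E_P[fun w => U ((X w + sup (Aset X Z q) + q) * Delta)] =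
   'E_P[fun w => U ((Z w + q) * Delta)])%E.
Proof.
move=> hX hZ X0 XZ q0.
have LF a : (fun w => U ((X w + a + q) * Delta)) \in Lfun P 1.
  apply: (@LU _ (a + q)) => [|w].
    apply: rpredD; last exact: Lfun_cst.
    apply: rpredD => //; exact: Lfun_cst.
  have := X0 w; lra.
pose phi := fun a => fine ('E_P[fun w => U ((X w + a + q) * Delta)])%E.
have EF a : ('E_P[fun w => U ((X w + a + q) * Delta)] = (phi a)%:E)%E.
  by rewrite /phi fineK // expectation_fin_num.
have LZ : (fun w => U ((Z w + q) * Delta)) \in Lfun P 1.
  apply: (@LU _ q) => [|w].
    apply: rpredD => //; exact: Lfun_cst.
  have := X0 w; have := XZ w; lra.
pose c := fine ('E_P[fun w => U ((Z w + q) * Delta)])%E.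
have Ec : ('E_P[fun w => U ((Z w + q) * Delta)] = c%:E)%E.
  by rewrite /c fineK // expectation_fin_num.
have mono a b : a <= b -> phi a <= phi b.
  move=> ab; rewrite -lee_fin -!EF; apply: E_le => // w.
  apply: U_nd; apply: ler_wpM2r; [exact: ltW | lra].
have conc a b l : 0 <= l <= 1 -> l * phi a + (1 - l) * phi b <= phi (l * a + (1 - l) * b).
  move=> l01; rewrite -lee_fin -EF.
  have -> : ((l * phi a + (1 - l) * phi b)%:E =
     'E_P[(l \o* (fun w => U ((X w + a + q) * Delta))) \+
          ((1 - l) \o* (fun w => U ((X w + b + q) * Delta)))])%E.
    rewrite expectationD; [|exact: Lfun_scale|exact: Lfun_scale].
    by rewrite !expectationZl // !EF -!EFinM -EFinD.
  apply: E_le => //.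
    by apply: rpredD; exact: Lfun_scale.
  move=> w /=.
  have := @hc ((X w + a + q) * Delta) ((X w + b + q) * Delta) l l01.
  have -> : (X w + (l * a + (1 - l) * b) + q) * Delta =
     l * ((X w + a + q) * Delta) + (1 - l) * ((X w + b + q) * Delta).
    have -> : X w = l * X w + (1 - l) * X w by ring.
    ring.
  by rewrite mulrC (mulrC _ (1 - l)).
have f0 : phi 0 <= c.
  rewrite -lee_fin -EF -Ec; apply: E_le => // w.
  apply: U_nd; apply: ler_wpM2r; first exact: ltW.
  have := XZ w; lra.
have [K HK] : exists K, ('E_P[fun w => U ((Z w + q) * Delta)] < (U K)%:E)%E.
  apply: (@jensen_bnd (fun w => Z w + q) q).
    apply: rpredD => //; exact: Lfun_cst.
  move=> w; have := X0 w; have := XZ w; lra.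
have bnd : forall p, phi p <= c -> p < K / Delta.
  move=> p pc; rewrite ltNge; apply/negP => Kp.
  have KpD : K <= p * Delta by rewrite -ler_pdivrMr.
  have : ((U K)%:E <= (phi p)%:E)%E.
    rewrite -EF -(expectation_cst P (U K)).
    apply: E_le => //; first exact: Lfun_cst.
    move=> w /=; apply: U_nd; apply: (le_trans KpD); apply: ler_wpM2r; first exact: ltW.
    have := X0 w; lra.
  rewrite Ec in HK; rewrite lee_fin; rewrite lte_fin in HK; lra.
have [s0 sc] := @sup_arg phi c (K / Delta) mono conc f0 bnd.
have -> : Aset X Z q = [set p | 0 < p /\ phi p <= c].
  by apply: eq_set => p; rewrite EF Ec lee_fin.
by split => //; rewrite EF Ec sc.
Qed.

Lemma inj_E (X : T -> R) a b : X \in Lfun P 1 -> (forall w, 0 <= X w) ->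
  ('E_P[fun w => U ((X w + a) * Delta)] = 'E_P[fun w => U ((X w + b) * Delta)])%E -> a = b.
Proof.
move=> hX X0 e.
have La c : (fun w => U ((X w + c) * Delta)) \in Lfun P 1.
  apply: (@LU _ c) => [|w].
    apply: rpredD => //; exact: Lfun_cst.
  have := X0 w; lra.
have pw c1 c2 : c1 < c2 -> forall w, U ((X w + c1) * Delta) < U ((X w + c2) * Delta).
  by move=> c12 w; apply: hU; rewrite ltr_pM2r // ltrD2l.
case: (ltgtP a b) => // ab.
  by have := E_lt _ _ (La a) (La b) (pw _ _ ab); rewrite e ltxx.
by have := E_lt _ _ (La b) (La a) (pw _ _ ab); rewrite e ltxx.
Qed.
End core.

Theorem lemma19 (d : measure_display) (T : measurableType d) (R : realType)
  (P : probability T R) (n : nat) (U : R -> R)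
  (Y : nat -> {RV P >-> R}) (Delta : R) :
  0 < Delta ->
  concave_fun U ->
  strictly_increasing U ->
  (forall i : nat, (1 <= i <= n)%N -> forall w : T, 0 <= Y i w) ->
  (forall i : nat, (1 <= i <= n)%N ->
     P.-integrable setT (fun w => (Y i w)%:E)) ->
  indifference_menu P n U (fun i => Y i) Delta (pstar P n U (fun i => Y i) Delta) /\
  (forall p : nat -> R, indifference_menu P n U (fun i => Y i) Delta p ->
     forall t : nat, (1 <= t <= n)%N -> p t = pstar P n U (fun i => Y i) Delta t).
Proof.
move=> hD hc hU Ypos Yint.
set Yf := (fun i => (Y i : T -> R)).
have YL i : (1 <= i <= n)%N -> Yf i \in Lfun P 1.
  by move=> hi; apply/(Lfun1_integrable P); exact: Yint.
have psumS t : (1 <= t)%N -> psum Yf t.+1 = (fun w => psum Yf t w + Yf t w).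
  by move=> ht; apply/funext => w; rewrite /psum big_nat_recr.
have psum01 t : (t <= 1)%N -> psum Yf t = cst 0.
  by move=> ht; apply/funext => w; rewrite /psum big_geq.
have psL t : (t <= n.+1)%N -> psum Yf t \in Lfun P 1.
  elim: t => [|t IH] ht; first by rewrite psum01 //; exact: Lfun_cst.
  case: t IH ht => [|t] IH ht; first by rewrite psum01 //; exact: Lfun_cst.
  rewrite psumS //; apply: rpredD; first by apply: IH; lia.
  apply: YL; lia.
have ps0 t : (t <= n.+1)%N -> forall w, 0 <= psum Yf t w.
  move=> ht w; rewrite /psum big_nat_cond; apply: sumr_ge0 => i /andP[/andP[h1 h2] _].
  apply: Ypos; lia.
have psle t : (1 <= t <= n)%N -> forall w, psum Yf t w <= psum Yf t.+1 w.
  move=> /andP[t1 tn] w; rewrite psumS // lerDl; apply: Ypos; lia.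
have KEY t : (1 <= t <= n)%N -> forall q, 0 <= q ->
    0 <= pincr P U Yf Delta t q /\
    ('E_P[(fun w => U ((psum Yf t w + pincr P U Yf Delta t q + q) * Delta))%R] =
     'E_P[(fun w => U ((psum Yf t.+1 w + q) * Delta))%R])%E.
  move=> ht q q0.
  have h1 : (t <= n.+1)%N by lia.
  have h2 : (t.+1 <= n.+1)%N by lia.
  exact: (@core _ _ _ P U Delta hD hc hU _ _ q (psL t h1) (psL t.+1 h2) (ps0 t h1) (psle t ht) q0).
have pd0 k : (k <= n)%N -> 0 <= pstar_down P n U Yf Delta k.
  elim: k => [|k IH] hk //=.
  have hk' : (1 <= n - k <= n)%N by lia.
  have [h _] := KEY (n - k)%N hk' _ (IH (ltnW hk)).
  by rewrite addr_ge0 // IH // ltnW.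
have prec t : (1 <= t <= n)%N -> pstar P n U Yf Delta t =
    pstar P n U Yf Delta t.+1 + pincr P U Yf Delta t (pstar P n U Yf Delta t.+1).
  move=> ht; rewrite /pstar.
  have -> : (n.+1 - t = (n - t).+1)%N by lia.
  rewrite /= subSS (_ : (n - (n - t) = t)%N) //; lia.
pose V t := ('E_P[(fun w => U ((psum Yf t w + pstar P n U Yf Delta t) * Delta))%R])%E.
have Vstep t : (1 <= t <= n)%N -> V t = V t.+1.
  move=> ht.
  have q0 : 0 <= pstar P n U Yf Delta t.+1 by rewrite /pstar pd0 //; lia.
  have [_ K] := KEY t ht _ q0.
  rewrite /V -K (prec t ht).
  congr (expectation P _); apply/funext => w.
  by rewrite (addrC (pstar _ _ _ _ _ t.+1)) addrA.
have Vlast : V n.+1 = util_never P n U Yf Delta.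
  rewrite /V /pstar subnn /=.
  by congr (expectation P _); apply/funext => w; rewrite addr0.
have Vall t : (1 <= t <= n.+1)%N -> V t = V n.+1.
  move=> ht.
  have : forall k, (k <= n)%N -> V (n.+1 - k)%N = V n.+1.
    elim => [|k IH] hk; first by rewrite subn0.
    have -> : (n.+1 - k.+1 = n - k)%N by lia.
    rewrite Vstep; last by lia.
    have -> : ((n - k).+1 = n.+1 - k)%N by lia.
    by apply: IH; lia.
  move/(_ (n.+1 - t)%N); rewrite (_ : (n.+1 - (n.+1 - t) = t)%N); last by lia.
  by apply; lia.
have tU t : (1 <= t <= n.+1)%N -> tildeU P n U Yf Delta (pstar P n U Yf Delta) t = V t.
  move=> ht; rewrite /tildeU; case: ifP => tn //.
  have -> : t = n.+1 by apply/eqP; rewrite eqn_leq; apply/andP; split; lia.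
  by rewrite Vlast.
split.
  by move=> s t hs ht; rewrite !tU // !Vall.
move=> p hp t ht.
have hn1 : (1 <= n.+1 <= n.+1)%N by lia.
have ht1 : (1 <= t <= n.+1)%N by lia.
have := hp t n.+1 ht1 hn1.
rewrite /tildeU ltnn (_ : (t <= n)%N = true); last by lia.
rewrite -Vlast -(Vall t ht1) => e.
have h1 : (t <= n.+1)%N by lia.
exact: (@inj_E _ _ _ P U Delta hD hc hU _ _ _ (psL t h1) (ps0 t h1) e).
Qed.
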